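(* Let $\langle M,\mathsf{S}\rangle$ be a sum structure, $x\in M$, and $\mathcal{A}$ a non-empty family of subsets of $M$ such that $x\,\mathsf{S}\,A$ for every $A\in\mathcal{A}$. Then $x\,\mathsf{S}\,\bigcup\mathcal{A}$.
   Context: For a set $M$ and a relation $\mathsf{S}\subseteq M\times\mathcal{P}(M)$ define: $x\sqsubseteq_{\mathsf{S}} y$ iff there is $X\subseteq M$ with $y\,\mathsf{S}\,X$ and $x\in X$; $\mathrm{I}(x)=\{y\in M\mid y\sqsubseteq_{\mathsf{S}} x\}$ and for $A\subseteq M$, $\mathrm{I}(A)=\bigcup_{a\in A}\mathrm{I}(a)$; $x$ s-overlaps $y$ iff there are $X,Y\subseteq M$ with $x\,\mathsf{S}\,X$, $y\,\mathsf{S}\,Y$, $X\cap Y\neq\emptyset$; a set $A\subseteq M$ is pre-dense in $B\subseteq M$ iff for every $b\in B$ there is $a\in A$ such that $a$ s-overlaps $b$. A sum structure is a pair $\langle M,\mathsf{S}\rangle$ satisfying: (S1) for every non-empty $X\subseteq M$ there is $x\in M$ with $x\,\mathsf{S}\,X$; (S2) $x\,\mathsf{S}\,X\wedge y\,\mathsf{S}\,X\to x=y$; (S3) $x\,\mathsf{S}\,X\wedge y\,\mathsf{S}\,Y\wedge x\in Y\to y\,\mathsf{S}\,(X\cup Y)$; (S4) if $x\,\mathsf{S}\,X$, $x\,\mathsf{S}\,Y$ and $y\in Y$, then there are $z\in X$ and $Z,U\subseteq M$ with $z\,\mathsf{S}\,Z$, $y\,\mathsf{S}\,U$ and $Z\cap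 U\neq\emptyset$; (S5) for all $x\in M$ and $X\subseteq M$: if $X$ is pre-dense in $\mathrm{I}(x)$ then $x\,\mathsf{S}\,(\mathrm{I}(x)\cap\mathrm{I}(X))$. *)

(* Defs.v *)
Set Implicit Arguments.

Section SumStructure.
Variable M : Type.
Variable S : M -> (M -> Prop) -> Prop.

Definition sqle (x y : M) : Prop := exists X : M -> Prop, S y X /\ X x.

Definition Ix (x : M) : M -> Prop := fun y => sqle y x.

Definition IA (A : M -> Prop) : M -> Prop := fun y => exists a, A a /\ Ix a y.

Definition soverlaps (x y : M) : Prop :=
  exists X Y : M -> Prop, S x X /\ S y Y /\ exists z, X z /\ Y z.

Definition predense (A B : M -> Prop) : Prop :=
  forall b, B b -> exists a, A a /\ soverlaps a b.

Definition setU (X Y : M -> Prop) : M -> Prop := fun z => X z \/ Y z.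
Definition setI (X Y : M -> Prop) : M -> Prop := fun z => X z /\ Y z.

Definition sum_structure : Prop :=
  (forall X : M -> Prop, (exists z, X z) -> exists x, S x X) /\
  (forall x y X, S x X -> S y X -> x = y) /\
  (forall x y X Y, S x X -> S y Y -> Y x -> S y (setU X Y)) /\
  (forall x y X Y, S x X -> S x Y -> Y y ->
     exists z, X z /\ exists Z U : M -> Prop, S z Z /\ S y U /\ exists w, Z w /\ U w) /\
  (forall x X, predense X (Ix x) -> S x (setI (Ix x) (IA X))).

End SumStructure.

Definition bigU (M : Type) (F : (M -> Prop) -> Prop) : M -> Prop :=
  fun z => exists A, F A /\ A z.

(* Main.v *)
Require Import Defs.
From Stdlib Require Import Classical FunctionalExtensionality PropExtensionality.

Lemma pext (M : Type) (P Q : M -> Prop) : (forall z, P z <-> Q z) -> P = Q.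
Proof. intros H; apply functional_extensionality; intro z; apply propositional_extensionality; auto. Qed.

Theorem theorem3p8 (M : Type) (S : M -> (M -> Prop) -> Prop)
  (HS : sum_structure S) (x : M) (F : (M -> Prop) -> Prop)
  (Fne : exists A, F A) (HF : forall A, F A -> S x A) :
  S x (bigU F).
Proof.
  destruct HS as [S1 [S2 [S3 [S4 S5]]]].
  destruct Fne as [A0 FA0].
  set (U := bigU F).
  assert (Htr : forall c a b, sqle S c a -> sqle S a b -> sqle S c b).
  { intros c a b [C [HC Cc]] [A [HA Aa]].
    exists (setU C A); split; [eapply S3; eauto | left; exact Cc]. }
  assert (Key : forall w, S w U -> (forall a, U a -> sqle S a w) -> S w (IA S U)).
  { intros w HwU Hsub.
    assert (Hp : predense S U (Ix S w)).
    { intros b [Y [HY Yb]].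
      destruct (S4 w b U Y HwU HY Yb) as [z [Uz [Z [U' [HZ [HU' Hov]]]]]].
      exists z; split; [exact Uz|]. exists Z, U'; auto. }
    specialize (S5 w U Hp).
    replace (IA S U) with (setI (Ix S w) (IA S U)); [exact S5|].
    apply pext; intro z; split; [intros [_ H]; exact H|].
    intros H; split; [|exact H].
    destruct H as [a [Ua Ha]]. unfold Ix in *. eapply Htr; eauto. }
  destruct (classic (exists z, U z)) as [Hne | Hemp].
  - destruct (S1 U Hne) as [y Hy].
    assert (HxU : S x (IA S U)).
    { (* x S A0, show U predense in I(x) directly *)
      assert (Hp : predense S U (Ix S x)).
      { intros b [Y [HY Yb]].
        destruct (S4 x b A0 Y (HF A0 FA0) HY Yb) as [z [Az [Z [U' [HZ [HU' Hov]]]]]].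
        exists z; split; [exists A0; auto|]. exists Z, U'; auto. }
      pose proof (S5 x U Hp) as H5.
      replace (IA S U) with (setI (Ix S x) (IA S U)); [exact H5|].
      apply pext; intro z; split; [intros [_ H]; exact H|].
      intros H; split; [|exact H].
      destruct H as [a [[A [FA Aa]] Ha]]. unfold Ix in *. eapply Htr; [exact Ha|].
      exists A; split; auto. }
    assert (HyU : S y (IA S U)).
    { apply Key; auto. intros a Ua. exists U; split; auto. }
    rewrite (S2 x y _ HxU HyU). exact Hy.
  - replace U with A0; [exact (HF A0 FA0)|].
    apply pext; intro z; split; intro H.
    + exfalso; apply Hemp; exists z; exists A0; auto.
    + exfalso; apply Hemp; exists z; exact H.
Qed.
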